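(* Let $n\ge5$, let $k(\hat{\mathsf{A}}_n)$ and $k(\hat{\mathsf{S}}_n)$ denote the numbers of conjugacy classes of $\hat{\mathsf{A}}_n$ and $\hat{\mathsf{S}}_n$, respectively. Then $k(\hat{\mathsf{S}}_n)<2k(\hat{\mathsf{A}}_n)$.
   Context: $\hat{\mathsf{A}}_n$ is the double cover of $\mathsf{A}_n$ and $\hat{\mathsf{S}}_n$ denotes either of the two double covers of $\mathsf{S}_n$. *)

(* Defs.v *)
From mathcomp Require Import all_boot all_fingroup all_solvable.
Set Implicit Arguments. Unset Strict Implicit. Unset Printing Implicit Defensive.
Local Open Scope group_scope.

(* For n >= 4 these are exactly the two double covers 2.S_n^+ and 2.S_n^-. *)
Definition is_double_cover_Sym (n : nat) (gT : finGroupType) (G : {group gT})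
    (phi : {morphism G >-> {perm 'I_n}}) : Prop :=
  [/\ phi @* G = 'Sym_('I_n),
      #|'ker phi| = 2,
      'ker phi \subset 'Z(G)
    & 'ker phi \subset G^`(1)].

Definition double_cover_Alt (n : nat) (gT : finGroupType) (G : {group gT})
    (phi : {morphism G >-> {perm 'I_n}}) : {group gT} :=
  (phi @*^-1 'Alt_('I_n))%G.

(* Main.v *)
Require Import Defs.
From mathcomp Require Import all_boot all_fingroup all_solvable.
From mathcomp Require Import zify.
Set Warnings "-notation-overridden".
Set Implicit Arguments. Unset Strict Implicit. Unset Printing Implicit Defensive.
Open Scope group_scope.

Lemma fixJE (gT : finGroupType) (S : {set gT}) (a x : gT) :
  (x \in 'Fix_(S | 'J)[a]) = (x \in S) && (x ^ a == x).
Proof. rewrite inE; congr andb; exact/afix1P/eqP. Qed.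

Section CycS.
Variables (n m : nat) (Hm2 : (2 <= m)%N) (Hmn : (m <= n)%N) (Hnm : (n <= m.+1)%N).

Definition cf (i : 'I_n) : 'I_n := insubd i (if (i < m)%N then i.+1 %% m else i)%N.

Lemma cfE i : val (cf i) = if (i < m)%N then (i.+1 %% m)%N else i.
Proof.
rewrite /cf val_insubd; case: ifP => him //=.
case: ifP him => hi; last by rewrite ltn_ord.
by rewrite (leq_trans _ Hmn) // ltn_mod; lia.
Qed.

Lemma modS_small i : (i < m)%N -> (i.+1 %% m)%N = if i.+1 == m then 0%N else i.+1.
Proof.
move=> him; case: eqP => [->|ne]; first by rewrite modnn.
by rewrite modn_small //; lia.
Qed.

Lemma cf_inj : injective cf.
Proof.
move=> i j /(congr1 val); rewrite !cfE => e; apply: val_inj => /=.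
move: e; case: ifP => hi; case: ifP => hj; rewrite ?modS_small //.
- by case: eqP; case: eqP; lia.
- by case: eqP; lia.
- by case: eqP; lia.
Qed.

Definition c := perm cf_inj.

Lemma cE i : val (c i) = if (i < m)%N then (i.+1 %% m)%N else i.
Proof. by rewrite permE cfE. Qed.

Lemma cfixE i : (c i == i) = (m <= i)%N.
Proof.
apply/eqP/idP => [/(congr1 val)|h]; last by apply: val_inj; rewrite cE ltnNge h.
rewrite cE; case: ifP => hi //; last by rewrite leqNgt hi.
rewrite modS_small //; case: eqP => ? /= ; lia.
Qed.

Lemma cX (x : 'I_n) j : val x = 0%N -> (j < m)%N -> val ((c ^+ j) x) = j.
Proof.
move=> x0; elim: j => [|j IH] hj; first by rewrite expg0 perm1.
rewrite expgSr permM cE IH; last lia.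
have -> : (j < m)%N by lia.
by rewrite modS_small ?(ltnW hj) //; case: eqP; lia.
Qed.

Lemma comm_fix (r : {perm 'I_n}) (x : 'I_n) :
  val x = 0%N -> commute r c -> r x = x -> r = 1.
Proof.
move=> x0 rc rx; apply/permP => i; rewrite perm1.
case: (ltnP i m) => him.
  have ei : i = (c ^+ i) x by apply: val_inj; rewrite cX.
  have h := congr1 (fun p : {perm 'I_n} => p x) (commuteX i rc).
  by move: h; rewrite /= !permM rx -ei => /esym.
have : c (r i) == r i.
  have h := congr1 (fun p : {perm 'I_n} => p i) rc.
  move: h; rewrite /= !permM => ->.
  by have := cfixE i; rewrite him => /eqP ->.
rewrite cfixE => h; apply: val_inj => /=; have := ltn_ord i; have := ltn_ord (r i); lia.
Qed.

Lemma comm_cyc (t : {perm 'I_n}) (x : 'I_n) :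
  val x = 0%N -> commute t c -> exists k, t = c ^+ k.
Proof.
move=> x0 tc; exists (val (t x)).
have hx : (val (t x) < m)%N.
  rewrite ltnNge -cfixE; apply/eqP => h.
  have h2 := congr1 (fun p : {perm 'I_n} => p x) tc.
  move: h2; rewrite /= !permM h => /perm_inj /esym /eqP.
  by rewrite cfixE x0; lia.
set k := val (t x).
have ck : (c ^+ k) x = t x by apply: val_inj; rewrite cX.
have rc : commute (t * (c ^+ k)^-1) c.
  apply: commute_sym; apply: commuteM; first exact: commute_sym.
  by apply: commuteV; apply: commuteX.
have := comm_fix x0 rc; rewrite permM -ck permK => /(_ erefl) h.
by rewrite -(mulgKV (c ^+ k) t) h mul1g.
Qed.

Lemma cm : c ^+ m = 1.
Proof.
have x0 : (0 < n)%N by lia.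
pose x := Ordinal x0.
apply: (comm_fix (x := x)) => //; first by apply: commute_sym; apply: commuteX.
apply: val_inj => /=.
have -> : m = (m.-1).+1 by lia.
rewrite expgSr permM cE cX //; last lia.
have -> : (m.-1 < m)%N by lia.
have -> : m.-1.+1 = m by lia.
by rewrite modnn.
Qed.

Lemma odd_cX k : odd m -> odd_perm (c ^+ k) = false.
Proof.
move=> om.
have oc : odd_perm c = false.
  have e : c = c ^+ (m.+1) by rewrite expgS cm mulg1.
  rewrite e; have -> : m.+1 = (m.+1)./2 + (m.+1)./2 by rewrite addnn even_halfK //= om.
  by rewrite expgD odd_permM addbb.
elim: k => [|k IH]; first by rewrite expg0 odd_perm1.
by rewrite expgS odd_permM oc IH.
Qed.

End CycS.

Section Main.
Variables (n : nat) (gT : finGroupType) (G : {group gT})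
    (phi : {morphism G >-> {perm 'I_n}}).
Let H := double_cover_Alt phi.

Lemma memH x : (x \in H) = (x \in G) && ~~ odd_perm (phi x).
Proof.
rewrite /H /double_cover_Alt /= -Alt_even.
by apply/idP/andP => [/morphpreP//|[]]; apply: mem_morphpre.
Qed.

Lemma HsubG : H \subset G.
Proof. by apply/subsetP => x; rewrite memH => /andP[]. Qed.

Lemma actsH : [acts G, on H | 'J].
Proof.
rewrite astabsJ; apply/subsetP => a Ga; rewrite inE; apply/subsetP => _ /imsetP[x Hx ->].
move: Hx; rewrite !memH => /andP[Gx ox].
by rewrite groupJ // morphJ // odd_permJ.
Qed.

Lemma actsD : [acts G, on G :\: H | 'J].
Proof.
apply: action.actsD actsH; rewrite astabsJ; exact: normG.
Qed.

Lemma fixD_le a : a \in G -> (#|'Fix_(G :\: H | 'J)[a]| <= #|'Fix_(H | 'J)[a]|)%N.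
Proof.
move=> Ga.
have [->|[z Fz]] := set_0Vmem 'Fix_(G :\: H | 'J)[a]; first by rewrite cards0.
rewrite -(card_imset _ (mulgI z^-1)); apply: subset_leq_card.
apply/subsetP => _ /imsetP[x Fx ->].
move: Fz Fx; rewrite !fixJE !in_setD !memH => /andP[/andP[nHz Gz] /eqP zf] /andP[/andP[nHx Gx] /eqP xf].
rewrite Gz /= in nHz; rewrite Gx /= in nHx.
rewrite groupM ?groupV // morphM ?groupV // morphV // odd_permM odd_permV.
rewrite (negbNE nHz) (negbNE nHx) /=.
by rewrite conjMg conjVg zf xf.
Qed.

Lemma orbits_le_classes :
  (#|[set orbit 'J G x | x in H]| <= #|classes H|)%N.
Proof.
have key x : x \in H -> (repr (x ^: H)) ^: G = x ^: G.
  move=> Hx; have := mem_repr x (class_refl H x); case/imsetP => h Hh ->.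
  by apply: classGidl; apply: (subsetP HsubG).
have -> : [set orbit 'J G x | x in H] = [set (repr C) ^: G | C in classes H].
  apply/setP => C; apply/imsetP/imsetP => [[x Hx ->]|[D /imsetP[x Hx ->] ->]].
    by exists (x ^: H); [exact: mem_classes | rewrite orbitJ key].
  by exists x => //; rewrite orbitJ key.
exact: leq_imset_card.
Qed.

Lemma classes_le : (#|classes G| <=
  #|[set orbit 'J G x | x in H]| + #|[set orbit 'J G x | x in G :\: H]|)%N.
Proof.
have eG : H :|: (G :\: H) = G by rewrite -{1}(setIidPr HsubG) setID.
have e : classes G = [set orbit 'J G x | x in H] :|: [set orbit 'J G x | x in G :\: H].
  by rewrite -imsetU eG /classes; apply: eq_imset => x; rewrite orbitJ.
by rewrite e cardsU leq_subr.
Qed.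

End Main.

Theorem lemma4p5 (n : nat) (gT : finGroupType) (G : {group gT})
    (phi : {morphism G >-> {perm 'I_n}}) :
  5 <= n ->
  is_double_cover_Sym phi ->
  #|classes G| < 2 * #|classes (double_cover_Alt phi)|.
Proof.
move=> n5 [imG _ _ _].
pose m := if odd n then n else n.-1.
have om : odd m.
  rewrite /m; case: ifP => // on; move: on n5; case: (n) => [//|k] /= /negbT.
  by rewrite negbK.
have hm : [/\ (2 <= m)%N, (m <= n)%N & (n <= m.+1)%N].
  by rewrite /m; case: ifP => _; split; lia.
case: hm => Hm2 Hmn Hnm.
have n0 : (0 < n)%N by lia.
pose x0 := Ordinal n0.
have : c Hm2 Hmn Hnm \in phi @* G by rewrite imG inE.
case/morphimP => y Gy _ ey.
set H := double_cover_Alt phi.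
have fixD0 : 'Fix_(G :\: H | 'J)[y] = set0.
  apply/setP => x; rewrite fixJE in_setD memH inE; apply/negP.
  case/andP => /andP[nH Gx] /eqP xy.
  have cm : commute (phi x) (c Hm2 Hmn Hnm).
    rewrite ey /commute conjgC -morphJ // xy //.
  have [k ek] := comm_cyc (x:=x0) erefl cm.
  by move: nH; rewrite Gx ek odd_cX.
have fixH1 : (0 < #|'Fix_(H | 'J)[y]|)%N.
  by rewrite card_gt0; apply/set0Pn; exists 1; rewrite fixJE group1 conj1g eqxx.
have hs : (\sum_(a in G) #|'Fix_(G :\: H | 'J)[a]| < \sum_(a in G) #|'Fix_(H | 'J)[a]|)%N.
  rewrite (bigD1 y Gy) [X in (_ < X)%N](bigD1 y Gy) /= fixD0 cards0 add0n.
  apply: (leq_add fixH1); apply: leq_sum => a /andP[Ga _]; exact: fixD_le.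
rewrite !Frobenius_Cauchy ?actsH ?actsD // ltn_pmul2r ?cardG_gt0 // in hs.
have h1 := classes_le phi; have h2 := orbits_le_classes phi.
rewrite -/H in h1 h2 *.
move: hs h1 h2.
set a := #|[set orbit 'J G x | x in H]|.
set b := #|[set orbit 'J G x | x in G :\: H]|.
set k1 := #|classes G|. set k2 := #|classes H|.
clear; move=> hs h1 h2; lia.
Qed.
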